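(* In the setting of the context, let $\gamma^*\in(0,1)$ be the unique solution of $\sigma\gamma+mf\log(1-\gamma)=0$. If $\gamma\in(0,1)\setminus\{\gamma^*\}$, then there exists a number $\bar u_\gamma$ such that $\lim_{t\to+\infty}u_\gamma(x,t)=\bar u_\gamma$ for every $x\in[0,1)$.
   Context: Fix constants $\sigma>0$, $f>0$, $m>0$ with $\sigma>mf$. For $\gamma\in(0,1]$ let $u_\gamma$ be the unique (mild, in fact classical) solution of \[ \partial_tu_\gamma+\sigma x(1-x)\partial_xu_\gamma=\frac{mf}{\gamma}\big[u_\gamma(x+\gamma(1-x),t)-u_\gamma(x,t)\big]\ (0\le x\le1,\ t>0),\quad u_\gamma(x,0)=x. \] *)

(* Defs.v *)
From Stdlib Require Import Reals.
From Coquelicot Require Import Coquelicot.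
Open Scope R_scope.

Definition cont_within (D : R -> R -> Prop) (u : R -> R -> R) (x t : R) : Prop :=
  forall eps : R, 0 < eps -> exists delta : R, 0 < delta /\
    forall y s : R, D y s -> Rabs (y - x) < delta -> Rabs (s - t) < delta ->
      Rabs (u y s - u x t) < eps.

Definition Dclosed (x t : R) : Prop := 0 <= x <= 1 /\ 0 <= t.
Definition Dpos (x t : R) : Prop := 0 <= x <= 1 /\ 0 < t.

(* u is a classical solution of
     d_t u + sigma x (1-x) d_x u = (m f / gamma) [u(x + gamma(1-x), t) - u(x,t)]
   on 0 <= x <= 1, t > 0, with u(x,0) = x:
   u is continuous on [0,1] x [0,+oo), C^1 on [0,1] x (0,+oo) (partial
   derivatives ux, ut exist and are continuous up to x = 0, 1; at x = 0, 1 the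
   x-derivative is the continuous extension of the interior one), and the
   equation holds pointwise. *)
Definition classical_solution (sigma f m gamma : R) (u : R -> R -> R) : Prop :=
  (forall x, 0 <= x <= 1 -> u x 0 = x) /\
  (forall x t, Dclosed x t -> cont_within Dclosed u x t) /\
  exists ux ut : R -> R -> R,
    (forall x t, 0 < x < 1 -> 0 < t -> is_derive (fun y => u y t) x (ux x t)) /\
    (forall x t, Dpos x t -> is_derive (fun s => u x s) t (ut x t)) /\
    (forall x t, Dpos x t -> cont_within Dpos ux x t) /\
    (forall x t, Dpos x t -> cont_within Dpos ut x t) /\
    (forall x t, Dpos x t ->
       ut x t + sigma * x * (1 - x) * ux x t
       = m * f / gamma * (u (x + gamma * (1 - x)) t - u x t)).

(* Main.v *)
Require Import Defs.
From Stdlib Require Import Reals Lra Lia Psatz Classical ClassicalEpsilon.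
From Stdlib Require List.
From Coquelicot Require Import Coquelicot.
Open Scope R_scope.

Lemma isd_mult (f g : R -> R) x df dg : is_derive f x df -> is_derive g x dg ->
  is_derive (fun r => f r * g r) x (df * g x + f x * dg).
Proof. intros H1 H2. apply (is_derive_mult f g x df dg H1 H2). intros; apply Rmult_comm. Qed.

Lemma isd_plus (f g : R -> R) x df dg : is_derive f x df -> is_derive g x dg ->
  is_derive (fun r => f r + g r) x (df + dg).
Proof. intros H1 H2. apply (is_derive_plus f g x df dg H1 H2). Qed.

Lemma isd_minus (f g : R -> R) x df dg : is_derive f x df -> is_derive g x dg ->
  is_derive (fun r => f r - g r) x (df - dg).
Proof. intros H1 H2. apply (is_derive_minus f g x df dg H1 H2). Qed.

Lemma isd_comp (f g : R -> R) x df dg : is_derive f (g x) df -> is_derive g x dg ->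
  is_derive (fun r => f (g r)) x (dg * df).
Proof. intros H1 H2. apply (is_derive_comp f g x df dg H1 H2). Qed.

Lemma isd_eq (f : R -> R) (x l l' : R) : is_derive f x l -> l = l' -> is_derive f x l'.
Proof. intros H ->; exact H. Qed.

Lemma isd_cont (f : R -> R) x l : is_derive f x l -> continuity_pt f x.
Proof. intros H. apply continuity_pt_filterlim. apply (ex_derive_continuous (K:=R_AbsRing) (V:=R_NormedModule) f x). exists l; exact H. Qed.

Lemma cont_eps (f : R -> R) x : continuity_pt f x ->
  forall eps, 0 < eps -> exists d, 0 < d /\ forall y, Rabs (y - x) < d -> Rabs (f y - f x) < eps.
Proof.
  intros H eps He. destruct (H eps He) as [d [Hd Hy]]. exists d; split; auto.
  intros y Hyd. destruct (Req_dec y x) as [->|Hn].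
  - rewrite Rminus_diag, Rabs_R0; auto.
  - apply Hy. split. split; [exact I|auto]. exact Hyd.
Qed.

Lemma eps_cont (f : R -> R) x :
  (forall eps, 0 < eps -> exists d, 0 < d /\ forall y, Rabs (y - x) < d -> Rabs (f y - f x) < eps) ->
  continuity_pt f x.
Proof.
  intros H eps He. destruct (H eps He) as [d [Hd Hy]]. exists d; split; auto.
  intros y [_ Hyd]. apply Hy. exact Hyd.
Qed.

Definition clamp (a b r : R) := Rmin b (Rmax a r).

Lemma clamp_in a b r : a <= b -> a <= clamp a b r <= b.
Proof. intros. unfold clamp, Rmin, Rmax. repeat destruct Rle_dec; lra. Qed.

Lemma clamp_id a b r : a <= r <= b -> clamp a b r = r.
Proof. intros. unfold clamp, Rmin, Rmax. repeat destruct Rle_dec; lra. Qed.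

Lemma clamp_lip a b r s : a <= b -> Rabs (clamp a b r - clamp a b s) <= Rabs (r - s).
Proof. intros. unfold clamp, Rmin, Rmax. repeat destruct Rle_dec; unfold Rabs; repeat destruct Rcase_abs; lra. Qed.

Definition cont_in (f : R -> R) a b := forall s, continuity_pt (fun r => f (clamp a b r)) s.

Lemma cont_in_of_cont (f : R -> R) a b : a <= b -> (forall s, a <= s <= b -> continuity_pt f s) -> cont_in f a b.
Proof.
  intros Hab H s. apply eps_cont. intros eps He.
  destruct (cont_eps f (clamp a b s) (H _ (clamp_in a b s Hab)) eps He) as [d [Hd Hy]].
  exists d; split; auto. intros y Hyd. apply Hy.
  eapply Rle_lt_trans. apply clamp_lip; auto. auto.
Qed.

Lemma cont_in_plus f g a b : cont_in f a b -> cont_in g a b -> cont_in (fun r => f r + g r) a b.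
Proof. intros H1 H2 s. exact (continuity_pt_plus _ _ s (H1 s) (H2 s)). Qed.
Lemma cont_in_minus f g a b : cont_in f a b -> cont_in g a b -> cont_in (fun r => f r - g r) a b.
Proof. intros H1 H2 s. exact (continuity_pt_minus _ _ s (H1 s) (H2 s)). Qed.
Lemma cont_in_mult f g a b : cont_in f a b -> cont_in g a b -> cont_in (fun r => f r * g r) a b.
Proof. intros H1 H2 s. exact (continuity_pt_mult _ _ s (H1 s) (H2 s)). Qed.
Lemma cont_in_const k a b : cont_in (fun _ => k) a b.
Proof. intros s. apply continuity_pt_const. intros x y; reflexivity. Qed.

Lemma mono_within (f df : R -> R) a b : a <= b ->
  (forall s, a < s < b -> is_derive f s (df s)) ->
  (forall s, a < s < b -> 0 <= df s) -> cont_in f a b -> f a <= f b.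
Proof.
  intros Hab Hd Hpos Hc.
  set (g := fun r => f (clamp a b r)).
  set (dg := fun s => if Rlt_dec a s then if Rlt_dec s b then df s else 0 else 0).
  destruct (MVT_gen g a b dg) as [c [Hc1 Hc2]].
  - intros x Hx. rewrite Rmin_left in Hx by lra. rewrite Rmax_right in Hx by lra.
    unfold dg. destruct Rlt_dec; [|lra]. destruct Rlt_dec; [|lra].
    apply (is_derive_ext_loc f g). apply (locally_interval _ x a b); simpl; try lra.
    intros y H1 H2. unfold g. rewrite clamp_id; auto; lra. apply Hd; lra.
  - intros x _. apply Hc.
  - unfold g in Hc2. rewrite !clamp_id in Hc2 by lra.
    assert (0 <= dg c). { unfold dg. repeat destruct Rlt_dec; try lra. apply Hpos; lra. }
    nra.
Qed.

Lemma mvt_seg (g dg : R -> R) a b : (forall y, Rmin a b <= y <= Rmax a b -> is_derive g y (dg y)) ->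
  exists c, Rmin a b <= c <= Rmax a b /\ g b - g a = dg c * (b - a).
Proof.
  intros H. apply MVT_gen.
  - intros y Hy. apply H; lra.
  - intros y Hy. eapply isd_cont. apply H; auto.
Qed.

Lemma seg_close a b c d : Rmin a b <= c <= Rmax a b -> Rabs (b - a) < d -> Rabs (c - a) < d.
Proof. unfold Rmin, Rmax. intros. repeat destruct Rle_dec; unfold Rabs in *; repeat destruct Rcase_abs; lra. Qed.

Lemma chain (g gx gt : R -> R -> R) (X : R -> R) (s0 dX dl : R) : 0 < dl ->
  (forall x t, Rabs (x - X s0) < dl -> Rabs (t - s0) < dl ->
     is_derive (fun y => g y t) x (gx x t) /\ is_derive (fun r => g x r) t (gt x t)) ->
  (forall eps, 0 < eps -> exists eta, 0 < eta /\ forall x t, Rabs (x - X s0) < eta -> Rabs (t - s0) < eta ->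
     Rabs (gx x t - gx (X s0) s0) < eps /\ Rabs (gt x t - gt (X s0) s0) < eps) ->
  is_derive X s0 dX ->
  is_derive (fun r => g (X r) r) s0 (gx (X s0) s0 * dX + gt (X s0) s0).
Proof.
  intros Hdl Hder Hcont HX.
  set (x0 := X s0). set (A := gx x0 s0). set (B := gt x0 s0).
  apply is_derive_Reals. intros eps Heps.
  set (K := Rabs dX + Rabs A + 2).
  assert (HK : 0 < K) by (unfold K; pose proof (Rabs_pos dX); pose proof (Rabs_pos A); lra).
  set (e1 := Rmin 1 (eps / (2 * K))).
  assert (He1 : 0 < e1) by (unfold e1; apply Rmin_pos; [lra| apply Rdiv_lt_0_compat; lra]).
  assert (He1a : e1 <= 1) by apply Rmin_l.
  assert (He1b : e1 * K <= eps / 2).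
  { assert (e1 <= eps / (2*K)) by apply Rmin_r.
    apply Rmult_le_compat_r with (r := K) in H; [|lra].
    replace (eps / (2 * K) * K) with (eps/2) in H by (field; lra). exact H. }
  destruct (Hcont e1 He1) as [eta [Heta Hc]].
  set (eta' := Rmin eta dl).
  assert (Heta' : 0 < eta') by (apply Rmin_pos; lra).
  pose proof HX as HX'. apply is_derive_Reals in HX'.
  destruct (HX' e1 He1) as [d1 Hd1].
  destruct (cont_eps X s0 (isd_cont _ _ _ HX) eta' Heta') as [d2 [Hd2 Hd2']].
  assert (Hp : 0 < Rmin (Rmin d1 d2) eta') by (apply Rmin_pos; [apply Rmin_pos; [apply cond_pos|lra]|lra]).
  exists (mkposreal _ Hp). intros h Hh0 Hh. simpl in Hh.
  assert (Hh1 : Rabs h < d1) by (eapply Rlt_le_trans; [exact Hh|]; eapply Rle_trans; apply Rmin_l).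
  assert (Hh2 : Rabs h < d2) by (eapply Rlt_le_trans; [exact Hh|]; eapply Rle_trans; [apply Rmin_l|apply Rmin_r]).
  assert (Hh3 : Rabs h < eta') by (eapply Rlt_le_trans; [exact Hh|]; apply Rmin_r).
  assert (Hle1 : eta' <= eta) by apply Rmin_l. assert (Hle2 : eta' <= dl) by apply Rmin_r.
  set (X1 := X (s0 + h)). set (t1 := s0 + h).
  assert (HX1 : Rabs (X1 - x0) < eta').
  { unfold X1. apply Hd2'. replace (s0 + h - s0) with h by ring. exact Hh2. }
  assert (Ht1 : Rabs (t1 - s0) < eta') by (unfold t1; replace (s0 + h - s0) with h by ring; exact Hh3).
  destruct (mvt_seg (fun y => g y t1) (fun y => gx y t1) x0 X1) as [xi [Hxi Hxi']].
  { intros y Hy. pose proof (seg_close _ _ _ _ Hy HX1). assert (Rabs (y - x0) < dl) by lra. assert (Rabs (t1 - s0) < dl) by lra. apply (proj1 (Hder y t1 ltac:(assumption) ltac:(assumption))). }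
  destruct (mvt_seg (fun r => g x0 r) (fun r => gt x0 r) s0 t1) as [tau [Htau Htau']].
  { intros y Hy. pose proof (seg_close _ _ _ _ Hy Ht1).
    assert (Rabs (x0 - X s0) < dl) by (unfold x0; rewrite Rminus_diag, Rabs_R0; lra).
    apply (proj2 (Hder x0 y ltac:(lra) ltac:(lra))). }
  simpl in Hxi', Htau'.
  assert (Hxi2 : Rabs (xi - x0) < eta') by exact (seg_close _ _ _ _ Hxi HX1).
  assert (Htau2 : Rabs (tau - s0) < eta') by exact (seg_close _ _ _ _ Htau Ht1).
  assert (Ex0 : X s0 = x0) by reflexivity.
  destruct (Hc xi t1) as [Ca _]; [rewrite Ex0; lra|lra|].
  destruct (Hc x0 tau) as [_ Cb]; [rewrite Ex0, Rminus_diag, Rabs_R0; lra|lra|].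
  rewrite Ex0 in Ca, Cb. fold A in Ca. fold B in Cb.
  set (q := (X1 - x0) / h).
  assert (Hq : Rabs (q - dX) < e1).
  { unfold q, X1, x0. apply Hd1; auto. }
  match goal with |- Rabs ?e < _ => replace e with ((gx xi t1 - A) * q + A * (q - dX) + (gt x0 tau - B)) end.
  2:{ unfold q. fold X1 t1 x0.
    replace (g X1 t1 - g x0 s0) with ((g X1 t1 - g x0 t1) + (g x0 t1 - g x0 s0)) by ring.
    rewrite Hxi', Htau'. unfold t1. field. exact Hh0. }
  assert (Hqb : Rabs q <= Rabs dX + 1).
  { replace q with ((q - dX) + dX) by ring. eapply Rle_trans. apply Rabs_triang. lra. }
  eapply Rle_lt_trans. apply Rabs_triang.
  eapply Rle_lt_trans. apply Rplus_le_compat_r. apply Rabs_triang.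
  rewrite !Rabs_mult.
  assert (Rabs (gx xi t1 - A) * Rabs q <= e1 * (Rabs dX + 1)).
  { apply Rmult_le_compat; try apply Rabs_pos; lra. }
  assert (Rabs A * Rabs (q - dX) <= Rabs A * e1).
  { apply Rmult_le_compat_l. apply Rabs_pos. lra. }
  unfold K in He1b. nra.
Qed.

Definition Phi (sigma r x : R) := x * exp (sigma * r) / (1 - x + x * exp (sigma * r)).
Definition Jm (gamma x : R) := x + gamma * (1 - x).

Lemma den_pos sigma r x : 0 <= x <= 1 -> 0 < 1 - x + x * exp (sigma * r).
Proof. intros Hx. pose proof (exp_pos (sigma * r)).
  destruct (Rle_lt_dec x 0). assert (x = 0) by lra. subst. lra. nra. Qed.

Lemma Phi_0 sigma x : 0 <= x <= 1 -> Phi sigma 0 x = x.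
Proof. intros. unfold Phi. rewrite Rmult_0_r, exp_0. field_simplify; lra. Qed.

Lemma Phi_in sigma r x : 0 <= x <= 1 -> 0 <= Phi sigma r x <= 1.
Proof. intros Hx. pose proof (den_pos sigma r x Hx). pose proof (exp_pos (sigma * r)). unfold Phi.
  split. apply Rdiv_le_0_compat; nra. apply Rmult_le_reg_r with (1 - x + x * exp (sigma * r)); auto.
  unfold Rdiv. rewrite Rmult_assoc, Rinv_l by lra. lra. Qed.

Lemma Phi_lt1 sigma r x : 0 <= x < 1 -> Phi sigma r x < 1.
Proof. intros Hx. assert (0 <= x <= 1) by lra. pose proof (den_pos sigma r x H). pose proof (exp_pos (sigma * r)). unfold Phi.
  apply Rmult_lt_reg_r with (1 - x + x * exp (sigma * r)); auto.
  unfold Rdiv. rewrite Rmult_assoc, Rinv_l by lra. lra. Qed.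

Lemma Phi_gt0 sigma r x : 0 < x <= 1 -> 0 < Phi sigma r x.
Proof. intros Hx. assert (0 <= x <= 1) by lra. pose proof (den_pos sigma r x H). pose proof (exp_pos (sigma * r)). unfold Phi.
  apply Rdiv_lt_0_compat; nra. Qed.

Lemma Phi_zero sigma r : Phi sigma r 0 = 0.
Proof. unfold Phi. unfold Rdiv. rewrite !Rmult_0_l. reflexivity. Qed.

Lemma Phi_one sigma r : Phi sigma r 1 = 1.
Proof. unfold Phi. pose proof (exp_pos (sigma * r)). field. lra. Qed.

Lemma one_minus_Phi sigma r x : 0 <= x <= 1 -> 1 - Phi sigma r x = (1 - x) / (1 - x + x * exp (sigma * r)).
Proof. intros. pose proof (den_pos sigma r x H). unfold Phi. field. lra. Qed.

Lemma Phi_mono sigma r x y : 0 <= x -> x <= y -> y <= 1 -> Phi sigma r x <= Phi sigma r y.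
Proof. intros. pose proof (den_pos sigma r x ltac:(lra)). pose proof (den_pos sigma r y ltac:(lra)).
  pose proof (exp_pos (sigma * r)). unfold Phi.
  set (E := exp (sigma * r)) in *. set (D1 := 1 - x + x * E) in *. set (D2 := 1 - y + y * E) in *.
  unfold Rdiv. apply Rmult_le_reg_r with (D1 * D2). nra.
  replace (x * E * / D1 * (D1 * D2)) with (x * E * D2) by (field; lra).
  replace (y * E * / D2 * (D1 * D2)) with (y * E * D1) by (field; lra).
  unfold D1, D2. assert (0 <= E * (y - x)) by (apply Rmult_le_pos; lra). nra. Qed.

Lemma Phi_der sigma T x s : 0 <= x <= 1 ->
  is_derive (fun r => Phi sigma (r - T) x) s (sigma * Phi sigma (s - T) x * (1 - Phi sigma (s - T) x)).
Proof. intros Hx. pose proof (den_pos sigma (s - T) x Hx). unfold Phi.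
  auto_derive; replace (s + - T) with (s - T) by ring. lra. field. lra. Qed.

Lemma Jm_in gamma x : 0 < gamma < 1 -> 0 <= x <= 1 -> 0 <= Jm gamma x <= 1.
Proof. unfold Jm. intros. nra. Qed.
Lemma Jm_lt1 gamma x : 0 < gamma < 1 -> 0 <= x < 1 -> Jm gamma x < 1.
Proof. unfold Jm. intros. nra. Qed.
Lemma Jm_mono gamma x y : 0 < gamma < 1 -> x <= y -> Jm gamma x <= Jm gamma y.
Proof. unfold Jm. intros. nra. Qed.
Lemma one_minus_Jm gamma x : 1 - Jm gamma x = (1 - gamma) * (1 - x).
Proof. unfold Jm. ring. Qed.

Section U.
Variables (sigma f m gamma : R) (u : R -> R -> R).
Hypothesis Hg : 0 < gamma < 1.
Hypothesis Hsol : classical_solution sigma f m gamma u.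

Lemma u_cont_along (X : R -> R) T : 0 <= T -> (forall r, continuity_pt X r) ->
  (forall r, 0 <= r <= T -> 0 <= X r <= 1) -> cont_in (fun r => u (X r) r) 0 T.
Proof.
  intros HT HXc HXin s. destruct Hsol as [_ [Hc _]].
  set (s' := clamp 0 T s). assert (Hs' : 0 <= s' <= T) by (apply clamp_in; lra).
  apply eps_cont. intros eps He.
  destruct (Hc (X s') s' (conj (HXin _ Hs') (proj1 Hs')) eps He) as [d1 [Hd1 H1]].
  destruct (cont_eps X s' (HXc s') d1 Hd1) as [d2 [Hd2 H2]].
  exists (Rmin d1 d2). split. apply Rmin_pos; lra.
  intros y Hy. fold s'. set (y' := clamp 0 T y). assert (Hy' : 0 <= y' <= T) by (apply clamp_in; lra).
  assert (Hyy : Rabs (y' - s') < Rmin d1 d2) by (eapply Rle_lt_trans; [apply clamp_lip; lra| exact Hy]).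
  pose proof (Rmin_l d1 d2). pose proof (Rmin_r d1 d2).
  apply H1. split. apply HXin; auto. lra. apply H2. lra. lra.
Qed.

Lemma char_cont T x : 0 <= T -> 0 <= x <= 1 -> cont_in (fun r => u (Phi sigma (r - T) x) r) 0 T.
Proof.
  intros HT Hx. apply u_cont_along; auto.
  - intros r. eapply isd_cont. apply Phi_der; auto.
  - intros r _. apply Phi_in; auto.
Qed.

Lemma char_deriv T x s : 0 <= x <= 1 -> 0 < s < T ->
  is_derive (fun r => u (Phi sigma (r - T) x) r) s
    (m * f / gamma * (u (Jm gamma (Phi sigma (s - T) x)) s - u (Phi sigma (s - T) x) s)).
Proof.
  intros Hx Hs. destruct Hsol as [_ [_ [ux [ut [Hux [Hut [Hcx [Hct Heq]]]]]]]].
  destruct (Req_dec x 0) as [->|Hx0].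
  { apply (is_derive_ext (fun r => u 0 r)). intros t. rewrite Phi_zero. reflexivity.
    rewrite Phi_zero. eapply isd_eq. apply Hut. split; lra.
    pose proof (Heq 0 s ltac:(split; lra)). unfold Jm. lra. }
  destruct (Req_dec x 1) as [->|Hx1].
  { apply (is_derive_ext (fun r => u 1 r)). intros t. rewrite Phi_one. reflexivity.
    rewrite Phi_one. eapply isd_eq. apply Hut. split; lra.
    pose proof (Heq 1 s ltac:(split; lra)). unfold Jm. lra. }
  set (X := fun r => Phi sigma (r - T) x).
  assert (HX : 0 < X s < 1).
  { unfold X. split. apply Phi_gt0; lra. apply Phi_lt1; lra. }
  set (dl := Rmin (Rmin (X s) (1 - X s)) s).
  assert (Hdl : 0 < dl) by (apply Rmin_pos; [apply Rmin_pos|]; lra).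
  assert (Hbox : forall y t, Rabs (y - X s) < dl -> Rabs (t - s) < dl -> 0 < y < 1 /\ 0 < t).
  { intros y t H1 H2. pose proof (Rmin_l (Rmin (X s) (1 - X s)) s). pose proof (Rmin_r (Rmin (X s) (1 - X s)) s).
    pose proof (Rmin_l (X s) (1 - X s)). pose proof (Rmin_r (X s) (1 - X s)). fold dl in H, H0.
    apply Rabs_def2 in H1. apply Rabs_def2 in H2. lra. }
  eapply isd_eq.
  apply (chain u ux ut X s (sigma * X s * (1 - X s)) dl Hdl).
  - intros y t H1 H2. destruct (Hbox y t H1 H2). split. apply Hux; lra. apply Hut. split; lra.
  - intros eps He.
    destruct (Hcx (X s) s ltac:(split; lra) eps He) as [d1 [Hd1 H1]].
    destruct (Hct (X s) s ltac:(split; lra) eps He) as [d2 [Hd2 H2]].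
    exists (Rmin dl (Rmin d1 d2)). split. repeat apply Rmin_pos; lra.
    intros y t Hy Ht.
    pose proof (Rmin_l dl (Rmin d1 d2)). pose proof (Rmin_r dl (Rmin d1 d2)).
    pose proof (Rmin_l d1 d2). pose proof (Rmin_r d1 d2).
    destruct (Hbox y t ltac:(lra) ltac:(lra)).
    split. apply H1; try split; lra. apply H2; try split; lra.
  - apply Phi_der; auto.
  - pose proof (Heq (X s) s ltac:(split; lra)) as HE. unfold X in *. unfold Jm. rewrite <- HE. ring.
Qed.

Lemma u_one t : 0 <= t -> u 1 t = 1.
Proof.
  intros Ht. destruct (Req_dec t 0) as [->|Ht0].
  { destruct Hsol as [H0 _]. apply H0; lra. }
  assert (Hd : forall s, 0 < s < t -> is_derive (fun r => u (Phi sigma (r - t) 1) r) s 0).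
  { intros s Hs. eapply isd_eq. apply char_deriv; auto. lra. rewrite Phi_one. unfold Jm. replace (1 + gamma * (1 - 1)) with 1 by ring. ring. }
  pose proof (char_cont t 1 Ht ltac:(lra)) as Hc.
  assert (E : forall r, u (Phi sigma (r - t) 1) r = u 1 r) by (intros; rewrite Phi_one; auto).
  pose proof (mono_within _ (fun _ => 0) 0 t Ht Hd ltac:(intros; lra) Hc).
  assert (Hc' : cont_in (fun r => - u (Phi sigma (r - t) 1) r) 0 t).
  { intros s. apply (continuity_pt_opp _ s (Hc s)). }
  assert (Hd' : forall s, 0 < s < t -> is_derive (fun r => - u (Phi sigma (r - t) 1) r) s 0).
  { intros s Hs. eapply isd_eq. apply (is_derive_opp (fun r => u (Phi sigma (r - t) 1) r)). apply Hd; auto. simpl. unfold opp; simpl. ring. }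
  pose proof (mono_within _ (fun _ => 0) 0 t Ht Hd' ltac:(intros; lra) Hc').
  cbv beta in *. rewrite !Phi_one in *. destruct Hsol as [Hini _]. rewrite (Hini 1) in *; lra.
Qed.

End U.

Definition fmax (g : R * (R * unit) -> R) (l : list (R * (R * unit))) :=
  List.fold_right (fun p acc => Rmax (g p) acc) 0 l.

Lemma fmax_ge g l p : List.In p l -> g p <= fmax g l.
Proof. induction l as [|a l IH]; simpl; [tauto|]. intros [->|H].
  apply Rmax_l. eapply Rle_trans. apply IH; auto. apply Rmax_r. Qed.

Lemma u_bounded (u : R -> R -> R) (Hc : forall x t, Dclosed x t -> cont_within Dclosed u x t) T0 :
  exists M, 0 <= M /\ forall x t, 0 <= x <= 1 -> 0 <= t <= T0 -> Rabs (u x t) <= M.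
Proof.
  assert (Hd : forall p : R * (R * unit), exists d : posreal,
     (0 <= fst p <= 1 /\ 0 <= fst (snd p)) -> forall y s, Dclosed y s -> Rabs (y - fst p) < d ->
        Rabs (s - fst (snd p)) < d -> Rabs (u y s - u (fst p) (fst (snd p))) < 1).
  { intros [a [b []]]. simpl. destruct (classic (0 <= a <= 1 /\ 0 <= b)) as [Hin|Hout].
    - destruct (Hc a b Hin 1 Rlt_0_1) as [d [Hd H]]. exists (mkposreal d Hd). intros _. exact H.
    - exists (mkposreal 1 Rlt_0_1). intros H; tauto. }
  set (delta := fun p => proj1_sig (constructive_indefinite_description _ (Hd p))).
  assert (Hdelta : forall p, (0 <= fst p <= 1 /\ 0 <= fst (snd p)) -> forall y s, Dclosed y s -> Rabs (y - fst p) < delta p ->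
        Rabs (s - fst (snd p)) < delta p -> Rabs (u y s - u (fst p) (fst (snd p))) < 1).
  { intros p. unfold delta. destruct (constructive_indefinite_description _ (Hd p)) as [d Hp]. exact Hp. }
  pose proof (compactness_list 2 (0, (0, tt)) (1, (T0, tt)) delta) as Hl.
  apply NNPP. intros Hn. apply Hl. intros [l Hl']. apply Hn.
  set (g := fun p : R * (R * unit) => Rabs (u (fst p) (fst (snd p))) + 1).
  exists (fmax g l). split.
  { destruct l as [|p l]. simpl; lra. simpl. eapply Rle_trans; [|apply Rmax_l]. unfold g. pose proof (Rabs_pos (u (fst p) (fst (snd p)))). lra. }
  intros x t Hx Ht. destruct (Hl' (x, (t, tt))) as [[a [b []]] [Hin [Hb Hcl]]].
  { simpl. tauto. }
  simpl in Hb, Hcl. pose proof (fmax_ge g l _ Hin) as Hfm. assert (Eg : g (a, (b, tt)) = Rabs (u a b) + 1) by reflexivity.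
  assert (Hu : Rabs (u x t - u a b) < 1).
  { apply (Hdelta (a, (b, tt))); simpl; try tauto; split; lra. }
  replace (u x t) with ((u x t - u a b) + u a b) by ring.
  eapply Rle_trans. apply Rabs_triang. assert (Hfm2 : Rabs (u a b) + 1 <= fmax g l) by exact Hfm. lra. Qed.

Lemma pow_deriv C c r n : is_derive (fun r => C * (c*r)^(S n)) r (C * (INR (S n) * c * (c*r)^n)).
Proof. auto_derive. auto. destruct n; simpl; ring. Qed.

Section Comp.
Variables (sigma f m gamma : R) (u : R -> R -> R).
Hypothesis Hg : 0 < gamma < 1.
Hypothesis Hc : 0 < m * f / gamma.
Hypothesis Hsol : classical_solution sigma f m gamma u.

Lemma comparison (Sd : R -> R -> Prop) (F : R -> R -> R -> R) (dF : R -> R -> R -> R -> R) (e : R) :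
  -1 <= e <= 1 ->
  (forall x y, Sd x y -> 0 <= x <= 1 /\ 0 <= y <= 1) ->
  (forall x y r, Sd x y -> r <= 0 -> Sd (Phi sigma r x) (Phi sigma r y)) ->
  (forall x y, Sd x y -> Sd (Jm gamma x) (Jm gamma y)) ->
  (forall x y s, Sd x y -> 0 <= s -> 0 <= F x y s) ->
  (forall x y, Sd x y -> e * (y - x) <= F x y 0) ->
  (forall x y T s, Sd x y -> 0 < T -> 0 <= s <= T ->
      is_derive (fun r => F (Phi sigma (r - T) x) (Phi sigma (r - T) y) r) s (dF x y T s)) ->
  (forall x y T s, Sd x y -> 0 < T -> 0 < s < T ->
      m * f / gamma * (F (Jm gamma (Phi sigma (s-T) x)) (Jm gamma (Phi sigma (s-T) y)) s
                       - F (Phi sigma (s-T) x) (Phi sigma (s-T) y) s) <= dF x y T s) ->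
  forall x y t, Sd x y -> 0 <= t -> e * (u y t - u x t) <= F x y t.
Proof.
  intros He HS HSP HSJ HF HF0 HdF HdFi x y t Hxy Ht.
  set (c := m * f / gamma) in *.
  pose proof Hsol as [Hini [Hcw _]].
  destruct (Req_dec t 0) as [->|Ht0].
  { destruct (HS x y Hxy). rewrite !Hini by auto. apply HF0; auto. }
  destruct (u_bounded u Hcw t) as [M [HM HMb]].
  set (Psi := fun x y s => F x y s - e * (u y s - u x s)).
  assert (Hclaim : forall n, forall x y T, Sd x y -> 0 <= T <= t ->
      -(2*M) * ((c*T)^n / INR (Factorial.fact n)) <= Psi x y T).
  { induction n as [|n IH]; intros x0 y0 T HS0 HT.
    - simpl. unfold Psi. destruct (HS x0 y0 HS0).
      pose proof (HMb x0 T ltac:(lra) ltac:(lra)). pose proof (HMb y0 T ltac:(lra) ltac:(lra)).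
      pose proof (HF x0 y0 T HS0 ltac:(lra)).
      assert (Rabs (e * (u y0 T - u x0 T)) <= 2 * M).
      { rewrite Rabs_mult. assert (Rabs e <= 1) by (apply Rabs_le; lra).
        assert (Rabs (u y0 T - u x0 T) <= 2 * M).
        { unfold Rminus. eapply Rle_trans. apply Rabs_triang. rewrite Rabs_Ropp. lra. }
        apply Rle_trans with (1 * (2 * M)). apply Rmult_le_compat; try apply Rabs_pos; lra. lra. }
      apply Rabs_le_between in H4. lra.
    - destruct (Req_dec T 0) as [->|HT0].
      { unfold Psi. destruct (HS x0 y0 HS0). rewrite !Hini by auto. pose proof (HF0 x0 y0 HS0).
        rewrite Rmult_0_r, pow_i by lia. lra. }
      assert (HTp : 0 < T) by lra.
      set (X := fun r => Phi sigma (r - T) x0). set (Y := fun r => Phi sigma (r - T) y0).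
      set (C := exp (c * T) * (2 * M) / INR (Factorial.fact (S n))).
      set (k := fun r => exp (c * r) * (F (X r) (Y r) r - e * (u (Y r) r - u (X r) r)) + C * (c * r) ^ (S n)).
      set (dk := fun r => c * exp (c * r) * (F (X r) (Y r) r - e * (u (Y r) r - u (X r) r))
            + exp (c * r) * (dF x0 y0 T r - e * (c * (u (Jm gamma (Y r)) r - u (Y r) r) - c * (u (Jm gamma (X r)) r - u (X r) r)))
            + C * (INR (S n) * c * (c * r) ^ n)).
      destruct (HS x0 y0 HS0) as [Hx0 Hy0].
      assert (Hmono : k 0 <= k T).
      { apply (mono_within k dk 0 T); [lra| | |].
        - intros r Hr. unfold k, dk. apply isd_plus; [|apply pow_deriv].
          apply (isd_mult (fun r => exp (c * r)) (fun r => F (X r) (Y r) r - e * (u (Y r) r - u (X r) r))).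
          + auto_derive; auto. ring.
          + apply (isd_minus (fun r => F (X r) (Y r) r) (fun r => e * (u (Y r) r - u (X r) r))). apply HdF; auto; lra.
            apply (is_derive_scal (fun r => u (Y r) r - u (X r) r)).
            apply (isd_minus (fun r => u (Y r) r) (fun r => u (X r) r)); apply (char_deriv sigma f m gamma u Hsol); auto.
        - intros r Hr. unfold dk.
          assert (HSr : Sd (Jm gamma (X r)) (Jm gamma (Y r))).
          { apply HSJ. apply HSP; auto. lra. }
          pose proof (IH _ _ r HSr ltac:(lra)) as IHr. unfold Psi in IHr. cbv beta in IHr.
          pose proof (HdFi x0 y0 T r HS0 HTp Hr) as Hi. change (Phi sigma (r - T) x0) with (X r) in Hi. change (Phi sigma (r - T) y0) with (Y r) in Hi.
          set (Q := (c * r) ^ n / INR (Factorial.fact n)).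
          assert (HQ : 0 <= Q) by (unfold Q; apply Rdiv_le_0_compat; [apply pow_le; nra| apply INR_fact_lt_0]).
          assert (HCQ : C * (INR (S n) * c * (c * r) ^ n) = exp (c * T) * (2 * M) * c * Q).
          { unfold C, Q. rewrite fact_simpl, mult_INR.
            assert (INR (S n) <> 0) by (apply not_0_INR; lia).
            assert (INR (Factorial.fact n) <> 0) by (apply Rgt_not_eq, INR_fact_lt_0).
            field. auto. }
          rewrite HCQ.
          assert (HE : exp (c * r) <= exp (c * T)) by (apply Rlt_le, exp_increasing; apply Rmult_lt_compat_l; lra).
          pose proof (exp_pos (c * r)).
          set (Er := exp (c * r)) in *. set (ET := exp (c * T)) in *.
          set (DJ := u (Jm gamma (Y r)) r - u (Jm gamma (X r)) r).
          assert (Heq : c * Er * (F (X r) (Y r) r - e * (u (Y r) r - u (X r) r)) +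
            Er * (dF x0 y0 T r - e * (c * (u (Jm gamma (Y r)) r - u (Y r) r) - c * (u (Jm gamma (X r)) r - u (X r) r)))
            = Er * (c * F (X r) (Y r) r + dF x0 y0 T r - e * c * DJ)) by (unfold DJ; ring).
          rewrite Heq.
          assert (H1 : c * F (X r) (Y r) r + dF x0 y0 T r - e * c * DJ >= c * (- (2*M) * Q)).
          { unfold DJ in *. change ((c * r) ^ n / INR (Factorial.fact n)) with Q in IHr. assert (c * (- (2 * M) * Q) <= c * (F (Jm gamma (X r)) (Jm gamma (Y r)) r - e * (u (Jm gamma (Y r)) r - u (Jm gamma (X r)) r))) by (apply Rmult_le_compat_l; lra). lra. }
          assert (H2 : 0 <= (ET - Er) * (2 * M) * c * Q).
          { apply Rmult_le_pos; [apply Rmult_le_pos; [apply Rmult_le_pos|]|]; lra. }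
          nra.
        - apply cont_in_plus. apply cont_in_mult.
          + apply cont_in_of_cont. lra. intros s Hs. eapply isd_cont. auto_derive; auto.
          + apply cont_in_minus. apply cont_in_of_cont. lra. intros s Hs. eapply isd_cont. apply HdF; auto.
            apply cont_in_mult. apply cont_in_const.
            apply cont_in_minus; apply (char_cont sigma f m gamma u Hsol); auto; lra.
          + apply cont_in_of_cont. lra. intros s Hs. eapply isd_cont. apply pow_deriv. }
      unfold k in Hmono. unfold X, Y in Hmono.
      rewrite Rminus_diag, !Phi_0 in Hmono by auto.
      rewrite Rmult_0_r, exp_0, pow_i, Rmult_0_r, Rplus_0_r, Rmult_1_l in Hmono by lia.
      assert (HS1 : Sd (Phi sigma (0 - T) x0) (Phi sigma (0 - T) y0)) by (apply HSP; auto; lra).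
      pose proof (HF0 _ _ HS1). destruct (HS _ _ HS1). rewrite !Hini in Hmono by auto.
      fold (Psi x0 y0 T) in Hmono.
      pose proof (exp_pos (c * T)).
      assert (HC : C * (c * T) ^ S n = exp (c * T) * ((2 * M) * ((c * T) ^ S n / INR (Factorial.fact (S n))))).
      { unfold C. field. apply Rgt_not_eq, INR_fact_lt_0. }
      rewrite HC in Hmono.
      apply Rmult_le_reg_l with (exp (c * T)); auto. nra. }
  cut (0 <= Psi x y t). { unfold Psi; cbv beta; lra. } apply Rnot_lt_le; intros Hneg.
  assert (Hp : 0 < - Psi x y t / (2 * M + 1)) by (apply Rdiv_lt_0_compat; lra).
  destruct (cv_speed_pow_fact (c * t) _ Hp) as [N HN].
  specialize (HN N (Nat.le_refl N)). unfold R_dist in HN. rewrite Rminus_0_r in HN.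
  pose proof (Hclaim N x y t Hxy ltac:(lra)).
  apply Rabs_def2 in HN. destruct HN as [HN _].
  assert (- Psi x y t / (2 * M + 1) * (2 * M + 1) = - Psi x y t) by (field; lra).
  assert (2 * M * ((c * t) ^ N / INR (Factorial.fact N)) <= 2 * M * (- Psi x y t / (2 * M + 1))) by (apply Rmult_le_compat_l; lra).
  nra.
Qed.

End Comp.

Lemma deriv_sign_pos (g : R -> R) l : is_derive g 0 l -> g 0 = 0 -> 0 < l ->
  exists a, -1/2 < a < 0 /\ g a < 0.
Proof.
  intros Hd H0 Hl. apply is_derive_Reals in Hd.
  destruct (Hd (l/2) ltac:(lra)) as [d Hdd].
  set (h := - Rmin (d/2) (1/4)).
  assert (Hh : -1/2 < h < 0).
  { unfold h. pose proof (Rmin_r (d/2) (1/4)). assert (0 < Rmin (d/2) (1/4)) by (apply Rmin_pos; pose proof (cond_pos d); lra). lra. }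
  assert (Hhd : Rabs h < d).
  { unfold h. rewrite Rabs_Ropp. pose proof (cond_pos d). assert (0 < Rmin (d/2) (1/4)) by (apply Rmin_pos; lra).
    rewrite Rabs_pos_eq by lra. pose proof (Rmin_l (d/2) (1/4)). lra. }
  specialize (Hdd h ltac:(lra) Hhd). rewrite Rplus_0_l, H0, Rminus_0_r in Hdd.
  apply Rabs_def2 in Hdd. exists h. split; auto.
  assert (g h / h > 0) by lra.
  replace (g h) with (g h / h * h) by (field; lra). nra.
Qed.

Lemma deriv_sign_neg (g : R -> R) l : is_derive g 0 l -> g 0 = 0 -> l < 0 ->
  exists a, 0 < a < 1/2 /\ g a < 0.
Proof.
  intros Hd H0 Hl. apply is_derive_Reals in Hd.
  destruct (Hd (-l/2) ltac:(lra)) as [d Hdd].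
  set (h := Rmin (d/2) (1/4)).
  assert (Hh : 0 < h < 1/2).
  { unfold h. pose proof (Rmin_r (d/2) (1/4)). assert (0 < Rmin (d/2) (1/4)) by (apply Rmin_pos; pose proof (cond_pos d); lra). lra. }
  assert (Hhd : Rabs h < d).
  { unfold h. pose proof (cond_pos d). assert (0 < Rmin (d/2) (1/4)) by (apply Rmin_pos; lra).
    rewrite Rabs_pos_eq by lra. pose proof (Rmin_l (d/2) (1/4)). lra. }
  specialize (Hdd h ltac:(lra) Hhd). rewrite Rplus_0_l, H0, Rminus_0_r in Hdd.
  apply Rabs_def2 in Hdd. exists h. split; auto.
  assert (g h / h < 0) by lra.
  replace (g h) with (g h / h * h) by (field; lra). nra.
Qed.

Lemma exp_small K lam eps : 0 <= K -> 0 < lam -> 0 < eps ->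
  exists M, forall t, M < t -> K * exp (- lam * t) < eps.
Proof.
  intros HK Hl He. exists ((ln (K + 1) - ln eps) / lam). intros t Ht.
  assert (lam * t > ln (K + 1) - ln eps).
  { apply Rmult_lt_compat_l with (r := lam) in Ht; auto. replace (lam * ((ln (K + 1) - ln eps) / lam)) with (ln (K + 1) - ln eps) in Ht by (field; lra). lra. }
  assert (exp (- lam * t) < eps / (K + 1)).
  { replace (eps / (K + 1)) with (exp (ln eps - ln (K + 1))).
    apply exp_increasing. lra.
    unfold Rminus. rewrite exp_plus, exp_Ropp, !exp_ln by lra. field. lra. }
  pose proof (exp_pos (- lam * t)).
  apply Rle_lt_trans with ((K + 1) * exp (- lam * t)). nra.
  apply Rmult_lt_reg_l with (/ (K + 1)). apply Rinv_0_lt_compat; lra.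
  replace (/ (K + 1) * ((K + 1) * exp (- lam * t))) with (exp (- lam * t)) by (field; lra).
  replace (/ (K + 1) * eps) with (eps / (K + 1)) by (field; lra). lra.
Qed.

Lemma ln_lt_sub1 y : 1 < y -> ln y < y - 1.
Proof. intros Hy. pose proof (exp_ineq1 (y - 1) ltac:(lra)).
  rewrite <- (ln_exp (y - 1)). apply ln_increasing; lra. Qed.

Lemma ell_decr g1 g2 : 0 < g1 -> g1 < g2 -> g2 < 1 -> ln (1 - g2) / g2 < ln (1 - g1) / g1.
Proof.
  intros H1 H12 H2.
  set (dl := fun g => (- g / (1 - g) - ln (1 - g)) / (g * g)).
  assert (Hder : forall x, 0 < x < 1 -> is_derive (fun g => ln (1 - g) / g) x (dl x)).
  { intros x Hx. auto_derive. split. lra. split; [lra|auto]. unfold dl.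
    replace (1 + - x) with (1 - x) by ring. field. lra. }
  destruct (MVT_gen (fun g => ln (1 - g) / g) g1 g2 dl) as [c [Hc Hceq]].
  - intros x Hx. rewrite Rmin_left in Hx by lra. rewrite Rmax_right in Hx by lra. apply Hder; lra.
  - intros x Hx. rewrite Rmin_left in Hx by lra. rewrite Rmax_right in Hx by lra.
    eapply isd_cont. apply Hder; lra.
  - rewrite Rmin_left in Hc by lra. rewrite Rmax_right in Hc by lra.
    assert (dl c < 0).
    { unfold dl. apply Rdiv_neg_pos; [|nra].
      pose proof (ln_lt_sub1 (1 / (1 - c)) ltac:(apply Rmult_lt_reg_r with (1 - c); [lra|]; field_simplify; lra)).
      unfold Rdiv in H at 1. rewrite Rmult_1_l, ln_Rinv in H by lra.
      replace (- c / (1 - c)) with (- (1 / (1 - c) - 1)) by (field; lra). lra. }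
    assert (dl c * (g2 - g1) < 0) by nra. lra.
Qed.

Lemma exp_le_mono a b : a <= b -> exp a <= exp b.
Proof. intros H. destruct (Rle_lt_or_eq_dec _ _ H) as [H' | ->]. apply Rlt_le, exp_increasing; auto. lra. Qed.

Lemma ln_nonpos z : 0 < z <= 1 -> ln z <= 0.
Proof. intros. rewrite <- ln_1. apply ln_le; lra. Qed.

Lemma pow_J p gamma w : 0 < gamma < 1 -> 0 <= w < 1 ->
  exp (p * ln (1 - Jm gamma w)) = exp (p * ln (1 - gamma)) * exp (p * ln (1 - w)).
Proof. intros. rewrite one_minus_Jm, ln_mult by lra. rewrite Rmult_plus_distr_l, exp_plus. reflexivity. Qed.

Lemma lim_of_bound (g : R -> R) (L K lam : R) : 0 <= K -> 0 < lam ->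
  (forall t, 0 <= t -> Rabs (g t - L) <= K * exp (- lam * t)) -> is_lim g p_infty L.
Proof.
  intros HK Hl Hb. apply is_lim_spec. intros eps. simpl.
  destruct (exp_small K lam eps HK Hl (cond_pos eps)) as [M HM].
  exists (Rmax M 0). intros t Ht. pose proof (Rmax_l M 0). pose proof (Rmax_r M 0).
  eapply Rle_lt_trans. apply Hb; lra. apply HM; lra.
Qed.

Section Case1.
Variables (sigma f m gamma : R) (u : R -> R -> R).
Hypothesis Hs : 0 < sigma.
Hypothesis Hg : 0 < gamma < 1.
Hypothesis Hc : 0 < m * f / gamma.
Hypothesis Hsol : classical_solution sigma f m gamma u.

Lemma case1 : sigma + m * f / gamma * ln (1 - gamma) < 0 ->
  forall x, 0 <= x < 1 -> is_lim (fun t => u x t) p_infty 1.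
Proof.
  intros Hneg.
  set (c := m * f / gamma) in *. set (L := ln (1 - gamma)) in *.
  set (phi := fun p => sigma * p + c * (exp (p * L) - 1)).
  assert (Hphi : is_derive phi 0 (sigma + c * L)).
  { unfold phi. auto_derive. auto. rewrite Rmult_0_l, exp_0. ring. }
  destruct (deriv_sign_neg phi _ Hphi ltac:(unfold phi; rewrite Rmult_0_r, Rmult_0_l, exp_0; ring) Hneg) as [p [Hp Hphip]].
  set (lam := - phi p). assert (Hlam : 0 < lam) by (unfold lam; lra).
  set (G := fun w => exp (p * ln (1 - w))).
  assert (HG : forall w, 0 <= w < 1 -> is_derive G w (G w * (p * (-1 / (1 - w))))).
  { intros w Hw. unfold G. auto_derive. lra. replace (1 + - w) with (1 - w) by ring. field. lra. }
  assert (Hmain : forall e, -1 <= e <= 1 -> forall x t, 0 <= x < 1 -> 0 <= t ->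
      e * (u 1 t - u x t) <= exp (- lam * t) * G x).
  { intros e He x t Hx Ht.
    apply (comparison sigma f m gamma u Hg Hc Hsol (fun x y => 0 <= x < 1 /\ y = 1)
      (fun x y s => exp (- lam * s) * G x)
      (fun x y T s => exp (- lam * s) * G (Phi sigma (s - T) x) * (- lam - p * sigma * Phi sigma (s - T) x)) e He); auto.
    - intros x0 y0 [H1 ->]. lra.
    - intros x0 y0 r [H1 ->] _. split. split. apply Phi_in; lra. apply Phi_lt1; lra. apply Phi_one.
    - intros x0 y0 [H1 ->]. split. split. apply Jm_in; lra. apply Jm_lt1; lra. unfold Jm; ring.
    - intros x0 y0 s _ _. unfold G. pose proof (exp_pos (- lam * s)). pose proof (exp_pos (p * ln (1 - x0))). nra.
    - intros x0 y0 [H1 ->]. rewrite Rmult_0_r, exp_0, Rmult_1_l. unfold G.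
      pose proof (exp_pos (p * ln (1 - x0))).
      destruct (Rle_lt_dec 0 e).
      + apply Rle_trans with (1 - x0). nra.
        rewrite <- (exp_ln (1 - x0)) at 1 by lra. apply exp_le_mono.
        pose proof (ln_nonpos (1 - x0) ltac:(lra)). nra.
      + nra.
    - intros x0 y0 T s [H1 ->] HT Hs0. cbv beta.
      set (X := Phi sigma (s - T) x0).
      assert (HX : 0 <= X < 1) by (split; [apply Phi_in; lra | apply Phi_lt1; lra]).
      eapply isd_eq.
      apply (isd_mult (fun r => exp (- lam * r)) (fun r => G (Phi sigma (r - T) x0))).
      + auto_derive. auto. reflexivity.
      + apply (isd_comp G (fun r => Phi sigma (r - T) x0)). apply HG. fold X. lra. apply Phi_der. lra.
      + fold X. field. lra.
    - intros x0 y0 T s [H1 ->] HT Hs0. cbv beta.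
      set (X := Phi sigma (s - T) x0).
      assert (HX : 0 <= X < 1) by (split; [apply Phi_in; lra | apply Phi_lt1; lra]).
      unfold G. rewrite pow_J by lra. fold L.
      pose proof (exp_pos (- lam * s)). pose proof (exp_pos (p * ln (1 - X))).
      set (E1 := exp (- lam * s)) in *. set (G1 := exp (p * ln (1 - X))) in *.
      assert (Hl : - lam = sigma * p + c * (exp (p * L) - 1)) by (unfold lam, phi; ring).
      rewrite Hl.
      assert (0 <= E1 * G1 * (p * sigma * (1 - X))).
      { apply Rmult_le_pos. apply Rmult_le_pos; lra. apply Rmult_le_pos; [nra|lra]. }
      replace (E1 * G1 * (sigma * p + c * (exp (p * L) - 1) - p * sigma * X))
        with (c * (E1 * (exp (p * L) * G1) - E1 * G1) + E1 * G1 * (p * sigma * (1 - X))) by ring.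
      fold c. lra. }
  intros x Hx. apply (lim_of_bound _ 1 (G x) lam); auto.
  { unfold G. apply Rlt_le, exp_pos. }
  intros t Ht.
  pose proof (Hmain 1 ltac:(lra) x t Hx Ht). pose proof (Hmain (-1) ltac:(lra) x t Hx Ht).
  rewrite (u_one sigma f m gamma u Hsol t Ht) in *.
  apply Rabs_le. lra.
Qed.

End Case1.

Section Case2.
Variables (sigma f m gamma : R) (u : R -> R -> R).
Hypothesis Hs : 0 < sigma.
Hypothesis Hg : 0 < gamma < 1.
Hypothesis Hc : 0 < m * f / gamma.
Hypothesis Hsol : classical_solution sigma f m gamma u.

Lemma u0_cont a b : 0 <= a <= b -> cont_in (fun r => u 0 r) a b.
Proof.
  intros Hab s. destruct Hsol as [_ [Hcw _]].
  set (s' := clamp a b s). assert (Hs' : a <= s' <= b) by (apply clamp_in; lra).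
  apply eps_cont. intros eps He.
  assert (HD : Dclosed 0 s') by (split; [split|]; lra).
  destruct (Hcw 0 s' HD eps He) as [d1 [Hd1 H1]].
  exists d1. split; auto.
  intros y Hy. fold s'. set (y' := clamp a b y). assert (Hy' : a <= y' <= b) by (apply clamp_in; lra).
  assert (Hyy : Rabs (y' - s') < d1) by (eapply Rle_lt_trans; [apply clamp_lip; lra| exact Hy]).
  apply H1. split. lra. lra. rewrite Rminus_diag, Rabs_R0. lra. exact Hyy.
Qed.

Lemma case2 : 0 < sigma + m * f / gamma * ln (1 - gamma) ->
  exists Lm : R, forall x, 0 <= x < 1 -> is_lim (fun t => u x t) p_infty Lm.
Proof.
  intros Hpos.
  set (c := m * f / gamma) in *. set (L := ln (1 - gamma)) in *.
  set (phi := fun p => sigma * p + c * (exp (p * L) - 1)).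
  assert (Hphi : is_derive phi 0 (sigma + c * L)).
  { unfold phi. auto_derive. auto. rewrite Rmult_0_l, exp_0. ring. }
  destruct (deriv_sign_pos phi _ Hphi ltac:(unfold phi; rewrite Rmult_0_r, Rmult_0_l, exp_0; ring) Hpos) as [a [Ha Hphia]].
  set (lam := - phi a). assert (Hlam : 0 < lam) by (unfold lam; lra).
  set (Z := fun w => exp (a * ln (1 - w))).
  set (H := fun w => Z w / (- a)).
  assert (HZ : forall w, Z w = exp (a * ln (1 - w))) by reflexivity.
  assert (HH : forall w, H w = Z w / (- a)) by reflexivity.
  assert (HHd : forall w, w < 1 -> is_derive H w (Z w / (1 - w))).
  { intros w Hw. unfold H, Z. auto_derive. lra. replace (1 + - w) with (1 - w) by ring. field. lra. }
  assert (HHmono : forall x y, x <= y < 1 -> H x <= H y).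
  { intros x y Hxy. rewrite !HH, !HZ. unfold Rdiv. apply Rmult_le_compat_r. apply Rlt_le, Rinv_0_lt_compat; lra.
    apply exp_le_mono. assert (ln (1 - y) <= ln (1 - x)) by (apply ln_le; lra). nra. }
  assert (HHJ : forall w, 0 <= w < 1 -> H (Jm gamma w) = exp (a * L) * H w).
  { intros w Hw. rewrite !HH, !HZ, pow_J by lra. fold L. field. lra. }
  assert (HZ1 : forall x y, x <= y < 1 -> (1 - y) * Z y <= (1 - x) * Z x).
  { intros x y Hxy. rewrite !HZ.
    rewrite <- (exp_ln (1 - y)) at 1 by lra. rewrite <- (exp_ln (1 - x)) at 1 by lra.
    rewrite <- !exp_plus. apply exp_le_mono. assert (ln (1 - y) <= ln (1 - x)) by (apply ln_le; lra). nra. }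
  assert (Hmain : forall e, -1 <= e <= 1 -> forall x y t, 0 <= x <= y /\ y < 1 -> 0 <= t ->
      e * (u y t - u x t) <= exp (- lam * t) * (H y - H x)).
  { intros e He x y t Hxy Ht.
    apply (comparison sigma f m gamma u Hg Hc Hsol (fun x y => 0 <= x <= y /\ y < 1)
      (fun x y s => exp (- lam * s) * (H y - H x))
      (fun x y T s => - lam * exp (- lam * s) * (H (Phi sigma (s - T) y) - H (Phi sigma (s - T) x))
          + exp (- lam * s) * (sigma * Phi sigma (s - T) y * Z (Phi sigma (s - T) y) - sigma * Phi sigma (s - T) x * Z (Phi sigma (s - T) x))) e He); auto.
    - intros x0 y0 [H1 H2]. lra.
    - intros x0 y0 r [H1 H2] _. split. split. apply Phi_in; lra. apply Phi_mono; lra. apply Phi_lt1; lra.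
    - intros x0 y0 [H1 H2]. split. split. apply Jm_in; lra. apply Jm_mono; lra. apply Jm_lt1; lra.
    - intros x0 y0 s [H1 H2] _. pose proof (exp_pos (- lam * s)). pose proof (HHmono x0 y0 ltac:(lra)). nra.
    - intros x0 y0 [H1 H2]. rewrite Rmult_0_r, exp_0, Rmult_1_l.
      assert (y0 - x0 <= H y0 - H x0).
      { assert (Hm : (fun w => H w - w) x0 <= (fun w => H w - w) y0).
        { apply (mono_within (fun w => H w - w) (fun w => Z w / (1 - w) - 1) x0 y0); [lra| | |].
          - intros s Hs0. apply (isd_minus H (fun w => w)). apply HHd; lra. auto_derive; auto.
          - intros s Hs0. assert (Z s / (1 - s) >= 1); [|lra].
            rewrite HZ. apply Rle_ge. apply Rmult_le_reg_r with (1 - s). lra.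
            unfold Rdiv. rewrite Rmult_assoc, Rinv_l, Rmult_1_r, Rmult_1_l by lra.
            rewrite <- (exp_ln (1 - s)) at 1 by lra. apply exp_le_mono.
            pose proof (ln_nonpos (1 - s) ltac:(lra)). nra.
          - apply cont_in_of_cont. lra. intros s Hs0. eapply isd_cont.
            apply (isd_minus H (fun w => w)). apply HHd; lra. auto_derive; auto. }
        simpl in Hm. lra. }
      pose proof (HHmono x0 y0 ltac:(lra)).
      destruct (Rle_lt_dec 0 e); nra.
    - intros x0 y0 T s [H1 H2] HT Hs0. cbv beta.
      set (X := Phi sigma (s - T) x0). set (Y := Phi sigma (s - T) y0).
      assert (HX : 0 <= X < 1) by (split; [apply Phi_in; lra | apply Phi_lt1; lra]).
      assert (HY : 0 <= Y < 1) by (split; [apply Phi_in; lra | apply Phi_lt1; lra]).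
      eapply isd_eq.
      apply (isd_mult (fun r => exp (- lam * r)) (fun r => H (Phi sigma (r - T) y0) - H (Phi sigma (r - T) x0))).
      + auto_derive. auto. reflexivity.
      + apply (isd_minus (fun r => H (Phi sigma (r - T) y0)) (fun r => H (Phi sigma (r - T) x0))).
        apply (isd_comp H (fun r => Phi sigma (r - T) y0)). apply HHd. fold Y. lra. apply Phi_der. lra.
        apply (isd_comp H (fun r => Phi sigma (r - T) x0)). apply HHd. fold X. lra. apply Phi_der. lra.
      + fold X Y. field. lra.
    - intros x0 y0 T s [H1 H2] HT Hs0. cbv beta.
      set (X := Phi sigma (s - T) x0). set (Y := Phi sigma (s - T) y0).
      assert (HX : 0 <= X < 1) by (split; [apply Phi_in; lra | apply Phi_lt1; lra]).
      assert (HY : 0 <= Y < 1) by (split; [apply Phi_in; lra | apply Phi_lt1; lra]).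
      assert (HXY : X <= Y) by (apply Phi_mono; lra).
      rewrite !HHJ by lra. fold c.
      pose proof (exp_pos (- lam * s)). set (E1 := exp (- lam * s)) in *.
      assert (Hl : - lam = sigma * a + c * (exp (a * L) - 1)) by (unfold lam, phi; ring).
      pose proof (HZ1 X Y ltac:(lra)).
      assert (0 <= E1 * sigma * ((1 - X) * Z X - (1 - Y) * Z Y)).
      { apply Rmult_le_pos; [apply Rmult_le_pos|]; lra. }
      assert (Heq : - lam * E1 * (H Y - H X) + E1 * (sigma * Y * Z Y - sigma * X * Z X)
         = c * (E1 * (exp (a * L) * H Y - exp (a * L) * H X) - E1 * (H Y - H X))
           + E1 * sigma * ((1 - X) * Z X - (1 - Y) * Z Y)).
      { rewrite Hl, !HH. field. lra. }
      rewrite Heq. lra. }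
  set (B := c * (H gamma - H 0)).
  assert (HB : 0 <= B) by (unfold B; pose proof (HHmono 0 gamma ltac:(lra)); nra).
  assert (Hd0 : forall r, 0 < r -> is_derive (fun r => u 0 r) r (c * (u gamma r - u 0 r))).
  { intros r Hr. eapply isd_eq.
    apply (is_derive_ext (fun r0 => u (Phi sigma (r0 - (r + 1)) 0) r0)).
    intros t. rewrite Phi_zero. reflexivity.
    apply (char_deriv sigma f m gamma u Hsol (r + 1) 0 r); lra.
    rewrite Phi_zero. unfold Jm. replace (0 + gamma * (1 - 0)) with gamma by ring. reflexivity. }
  assert (Hbd : forall r, 0 <= r -> Rabs (c * (u gamma r - u 0 r)) <= B * exp (- lam * r)).
  { intros r Hr. pose proof (Hmain 1 ltac:(lra) 0 gamma r ltac:(lra) Hr).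
    pose proof (Hmain (-1) ltac:(lra) 0 gamma r ltac:(lra) Hr).
    rewrite Rabs_mult, (Rabs_pos_eq c) by lra. unfold B.
    replace (c * (H gamma - H 0) * exp (- lam * r)) with (c * (exp (- lam * r) * (H gamma - H 0))) by ring.
    apply Rmult_le_compat_l. lra. apply Rabs_le. lra. }
  set (g1 := fun r => u 0 r - B / lam * exp (- lam * r)).
  set (g2 := fun r => - (u 0 r + B / lam * exp (- lam * r))).
  assert (Hexpd : forall r, is_derive (fun r => B / lam * exp (- lam * r)) r (- B * exp (- lam * r))).
  { intros r. auto_derive. auto. field. lra. }
  assert (Hg1 : forall r1 r2, 0 <= r1 <= r2 -> g1 r1 <= g1 r2).
  { intros r1 r2 Hr. apply (mono_within g1 (fun r => c * (u gamma r - u 0 r) - - B * exp (- lam * r)) r1 r2); [lra| | |].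
    - intros s Hs0. apply isd_minus. apply Hd0; lra. apply Hexpd.
    - intros s Hs0. pose proof (Hbd s ltac:(lra)). apply Rabs_le_between in H0. lra.
    - apply cont_in_minus. apply u0_cont; lra. apply cont_in_of_cont. lra. intros s _. eapply isd_cont. apply Hexpd. }
  assert (Hg2 : forall r1 r2, 0 <= r1 <= r2 -> g2 r1 <= g2 r2).
  { intros r1 r2 Hr. apply (mono_within g2 (fun r => - (c * (u gamma r - u 0 r) + - B * exp (- lam * r))) r1 r2); [lra| | |].
    - intros s Hs0. unfold g2. apply (is_derive_opp (fun r => u 0 r + B / lam * exp (- lam * r))).
      apply isd_plus. apply Hd0; lra. apply Hexpd.
    - intros s Hs0. pose proof (Hbd s ltac:(lra)). apply Rabs_le_between in H0. lra.
    - intros s. apply continuity_pt_opp. apply (cont_in_plus (fun r => u 0 r) (fun r => B / lam * exp (- lam * r)) r1 r2).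
      apply u0_cont; lra. apply cont_in_of_cont. lra. intros s0 _. eapply isd_cont. apply Hexpd. }
  assert (HBl : 0 <= B / lam) by (apply Rdiv_le_0_compat; lra).
  assert (Hbound : forall r, 0 <= r -> g1 r <= - g2 0).
  { intros r Hr. pose proof (Hg2 0 r ltac:(lra)). unfold g1, g2 in *.
    pose proof (exp_pos (- lam * r)). pose proof (exp_pos (- lam * 0)). nra. }
  destruct (completeness (fun v => exists r, 0 <= r /\ v = g1 r)) as [Lm [Hub Hlub]].
  { exists (- g2 0). intros v [r [Hr ->]]. apply Hbound; auto. }
  { exists (g1 0). exists 0. split; auto; lra. }
  assert (Hlim0 : forall eps, 0 < eps -> exists M, forall t, M < t -> Rabs (u 0 t - Lm) < eps).
  { intros eps He.
    assert (Hr0 : exists r0, 0 <= r0 /\ Lm - eps / 2 < g1 r0).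
    { apply NNPP. intros Hn. assert (Lm <= Lm - eps / 2); [|lra].
      apply Hlub. intros v [r [Hr ->]]. apply Rnot_lt_le. intros Hc'. apply Hn. exists r; auto. }
    destruct Hr0 as [r0 [Hr0 Hr0']].
    destruct (exp_small (B / lam) lam (eps / 2) HBl Hlam ltac:(lra)) as [M1 HM1].
    exists (Rmax r0 (Rmax M1 0)). intros t Ht.
    pose proof (Rmax_l r0 (Rmax M1 0)). pose proof (Rmax_r r0 (Rmax M1 0)).
    pose proof (Rmax_l M1 0). pose proof (Rmax_r M1 0).
    pose proof (Hg1 r0 t ltac:(lra)). assert (Ht0 : 0 <= t) by lra. pose proof (Hub (g1 t) (ex_intro _ t (conj Ht0 eq_refl))).
    pose proof (HM1 t ltac:(lra)). pose proof (exp_pos (- lam * t)).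
    unfold g1 in *. apply Rabs_lt_between. nra. }
  exists Lm. intros x Hx. apply is_lim_spec. intros eps. simpl.
  destruct (Hlim0 (eps / 2) ltac:(pose proof (cond_pos eps); lra)) as [M0 HM0].
  assert (HKx : 0 <= H x - H 0) by (pose proof (HHmono 0 x ltac:(lra)); lra).
  destruct (exp_small (H x - H 0) lam (eps / 2) HKx Hlam ltac:(pose proof (cond_pos eps); lra)) as [M1 HM1].
  exists (Rmax M0 (Rmax M1 0)). intros t Ht.
  pose proof (Rmax_l M0 (Rmax M1 0)). pose proof (Rmax_r M0 (Rmax M1 0)).
  pose proof (Rmax_l M1 0). pose proof (Rmax_r M1 0).
  pose proof (HM0 t ltac:(lra)). pose proof (HM1 t ltac:(lra)).
  pose proof (Hmain 1 ltac:(lra) 0 x t ltac:(lra) ltac:(lra)).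
  pose proof (Hmain (-1) ltac:(lra) 0 x t ltac:(lra) ltac:(lra)).
  apply Rabs_lt_between in H4.
  apply Rabs_lt_between. nra.
Qed.

End Case2.

Theorem proposition4p11 (sigma f m : R)
  (Hsigma : 0 < sigma) (Hf : 0 < f) (Hm : 0 < m) (Hsmf : m * f < sigma)
  (gstar : R) (Hgstar : 0 < gstar < 1)
  (Hgstar_eq : sigma * gstar + m * f * ln (1 - gstar) = 0)
  (gamma : R) (Hgamma : 0 < gamma < 1) (Hne : gamma <> gstar)
  (u : R -> R -> R) (Hu : classical_solution sigma f m gamma u) :
  exists ubar : R, forall x : R, 0 <= x < 1 ->
    is_lim (fun t => u x t) p_infty ubar.
Proof.
  assert (Hc : 0 < m * f / gamma) by (apply Rdiv_lt_0_compat; nra).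
  assert (Hst : sigma + m * f * (ln (1 - gstar) / gstar) = 0).
  { replace (sigma + m * f * (ln (1 - gstar) / gstar)) with ((sigma * gstar + m * f * ln (1 - gstar)) / gstar) by (field; lra).
    rewrite Hgstar_eq. field. lra. }
  assert (Heq : sigma + m * f / gamma * ln (1 - gamma) = sigma + m * f * (ln (1 - gamma) / gamma)) by (field; lra).
  assert (Hmf : 0 < m * f) by nra.
  destruct (Rlt_or_le gamma gstar) as [Hlt|Hle].
  - apply (case2 sigma f m gamma u Hsigma Hgamma Hc Hu).
    rewrite Heq. pose proof (ell_decr gamma gstar ltac:(lra) Hlt ltac:(lra)).
    assert (m * f * (ln (1 - gstar) / gstar) < m * f * (ln (1 - gamma) / gamma)) by (apply Rmult_lt_compat_l; lra).
    lra.
  - exists 1. apply (case1 sigma f m gamma u Hsigma Hgamma Hc Hu).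
    assert (Hgt : gstar < gamma) by (destruct Hle; [auto| congruence]).
    rewrite Heq. pose proof (ell_decr gstar gamma ltac:(lra) Hgt ltac:(lra)).
    assert (m * f * (ln (1 - gamma) / gamma) < m * f * (ln (1 - gstar) / gstar)) by (apply Rmult_lt_compat_l; lra).
    lra.
Qed.
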